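(* Let $U\in \mathbb{C}^{m\times p}$ and $V\in \mathbb{C}^{q\times m}$ be arbitrary matrices, and let $E=U(VU)^{\dagger}V$. Then $E$ is idempotent, and its range and null space are given by \[ R(E)=R(UU^{*}V^{*})=R(UU^{*}V^{*}V)=R(U)\cap \big((UU^{*})^{\dagger}(R(U)\cap N(V))\big)^{\perp}, \] \[ N(E)=N(U^{*}V^{*}V)=N(UU^{*}V^{*}V)=N(V)\oplus (V^{*}V)^{\dagger}\big(R(U)+N(V)\big)^{\perp}. \]
   Context: $A^{*}$ denotes the conjugate transpose of $A$; $A^{\dagger}$ denotes the Moore–Penrose inverse of $A$ (the unique $X$ with $AXA=A$, $XAX=X$, $(AX)^*=AX$, $(XA)^*=XA$). $R(A)$ and $N(A)$ are the range and null space of $A$. For a subspace $S\subseteq\mathbb{C}^m$, $S^{\perp}$ is its orthogonal complement with respect to the standard inner product, and for a matrix $B$, $BS=\{Bs:s\in S\}$. $\oplus$ denotes a direct sum of subspaces. *)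

(* Defs.v *)
(* Complex matrices over an arbitrary numeric algebraically
   closed field C (e.g. C = R[i], the complex numbers), with conjugation z^*. *)
From HB Require Import structures.
From mathcomp Require Import all_boot all_order all_algebra.
From Stdlib Require Import ClassicalEpsilon.
Set Implicit Arguments. Unset Strict Implicit. Unset Printing Implicit Defensive.
Import Order.TTheory GRing.Theory Num.Theory.
Local Open Scope ring_scope.

Section Defs.
Variable C : numClosedFieldType.

Definition ctrmx m n (A : 'M[C]_(m, n)) : 'M[C]_(n, m) := (map_mx Num.conj A)^T.

Definition is_MP m n (A : 'M[C]_(m, n)) (X : 'M[C]_(n, m)) : Prop :=
  [/\ A *m X *m A = A, X *m A *m X = X,
      ctrmx (A *m X) = A *m X & ctrmx (X *m A) = X *m A].

Definition mpinv m n (A : 'M[C]_(m, n)) : 'M[C]_(n, m) :=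
  epsilon (inhabits 0) (is_MP A).

Definition subsp m := 'cV[C]_m -> Prop.

Definition range m n (A : 'M[C]_(m, n)) : subsp m :=
  fun x => exists y : 'cV[C]_n, x = A *m y.
Definition nullsp m n (A : 'M[C]_(m, n)) : subsp n :=
  fun x => A *m x = 0.
Definition orthc m (S : subsp m) : subsp m :=
  fun x => forall y, S y -> ctrmx y *m x = 0.
Definition imsp m n (B : 'M[C]_(m, n)) (S : subsp n) : subsp m :=
  fun x => exists2 s, S s & x = B *m s.
Definition capsp m (S T : subsp m) : subsp m := fun x => S x /\ T x.
Definition addsp m (S T : subsp m) : subsp m :=
  fun x => exists s t, [/\ S s, T t & x = s + t].
Definition eqsp m (S T : subsp m) : Prop := forall x, S x <-> T x.
Definition is_dsum m (X S T : subsp m) : Prop :=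
  eqsp X (addsp S T) /\ (forall x, S x -> T x -> x = 0).
End Defs.

(* Main.v *)
Require Import Defs.
From HB Require Import structures.
From mathcomp Require Import all_boot all_order all_algebra.
From Stdlib Require Import ClassicalEpsilon.
Import GRing.Theory Num.Theory.
Local Open Scope ring_scope.

Section Aux.
Variable C : numClosedFieldType.
Implicit Types m n p : nat.

Lemma ctrmx_mul m n p (A : 'M[C]_(m, n)) (B : 'M[C]_(n, p)) :
  ctrmx (A *m B) = ctrmx B *m ctrmx A.
Proof. by rewrite /ctrmx map_mxM trmx_mul. Qed.

Lemma ctrmxK m n (A : 'M[C]_(m, n)) : ctrmx (ctrmx A) = A.
Proof. by apply/matrixP=> i j; rewrite /ctrmx !mxE conjCK. Qed.

Lemma ctrmxD m n (A B : 'M[C]_(m, n)) : ctrmx (A + B) = ctrmx A + ctrmx B.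
Proof. by apply/matrixP=> i j; rewrite /ctrmx !mxE rmorphD. Qed.

Lemma ctrmxN m n (A : 'M[C]_(m, n)) : ctrmx (- A) = - ctrmx A.
Proof. by apply/matrixP=> i j; rewrite /ctrmx !mxE rmorphN. Qed.

Lemma ctrmxB m n (A B : 'M[C]_(m, n)) : ctrmx (A - B) = ctrmx A - ctrmx B.
Proof. by rewrite ctrmxD ctrmxN. Qed.

Lemma ctrmx0 m n : ctrmx (0 : 'M[C]_(m, n)) = 0.
Proof. by apply/matrixP=> i j; rewrite /ctrmx !mxE rmorph0. Qed.

Lemma ctrmx1 n : ctrmx (1%:M : 'M[C]_n) = 1%:M.
Proof.
by apply/matrixP=> i j; rewrite /ctrmx !mxE conjC_nat eq_sym.
Qed.

Lemma cfree m n (A : 'M[C]_(m, n)) : ctrmx A *m A = 0 -> A = 0.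
Proof.
move=> H; apply/matrixP=> i j; rewrite mxE.
have := congr1 (fun M : 'M[C]_n => M j j) H; rewrite !mxE => /eqP.
under eq_bigr => k _ do rewrite /ctrmx !mxE mulrC.
rewrite psumr_eq0; last by move=> k _; exact: mul_conjC_ge0.
move=> /allP /(_ i (mem_index_enum _)) /=.
by rewrite mul_conjC_eq0 => /eqP.
Qed.

Lemma cfree' m n (A : 'M[C]_(m, n)) : A *m ctrmx A = 0 -> A = 0.
Proof.
move=> H; rewrite -[A]ctrmxK (@cfree _ _ (ctrmx A)) ?ctrmx0 //.
by rewrite ctrmxK.
Qed.

Lemma ker_aat m n k (U : 'M[C]_(m, n)) (y : 'M[C]_(m, k)) :
  U *m ctrmx U *m y = 0 -> ctrmx U *m y = 0.
Proof.
move=> H; apply: cfree; rewrite ctrmx_mul ctrmxK -mulmxA (mulmxA U) H.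
by rewrite mulmx0.
Qed.

Lemma ker_aat_l m n k (U : 'M[C]_(m, n)) (B : 'M[C]_(k, m)) :
  B *m U *m ctrmx U = 0 -> B *m U = 0.
Proof.
move=> H; apply: cfree'; rewrite ctrmx_mul mulmxA H mul0mx //.
Qed.

Lemma ker_ata m n k (U : 'M[C]_(m, n)) (y : 'M[C]_(n, k)) :
  ctrmx U *m U *m y = 0 -> U *m y = 0.
Proof.
move=> H; apply: cfree; rewrite ctrmx_mul.
by rewrite -mulmxA (mulmxA (ctrmx U)) H mulmx0.
Qed.


Lemma unit_ata m r (F : 'M[C]_(m, r)) (B : 'M[C]_(r, m)) :
  B *m F = 1%:M -> ctrmx F *m F \in unitmx.
Proof.
move=> hB; rewrite unitmxE unitfE; apply/negP => /det0P [v nz hv].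
move/negP: nz; apply; apply/eqP.
have h1 : F *m ctrmx v = 0.
  apply: cfree; rewrite ctrmx_mul ctrmxK -mulmxA (mulmxA (ctrmx F)).
  by rewrite mulmxA hv mul0mx.
have h2 : ctrmx v = 0 by rewrite -[ctrmx v]mul1mx -hB -mulmxA h1 mulmx0.
by rewrite -[v]ctrmxK h2 ctrmx0.
Qed.

Lemma ctrmx_inv n (M : 'M[C]_n) : ctrmx (invmx M) = invmx (ctrmx M).
Proof. by rewrite /ctrmx map_invmx trmx_inv. Qed.

Lemma MP_fact m n r (F : 'M[C]_(m, r)) (G : 'M[C]_(r, n)) BF BG :
  BF *m F = 1%:M -> G *m BG = 1%:M -> exists X, is_MP (F *m G) X.
Proof.
move=> hBF hBG.
set A := F *m G.
have hA : F *m G = A by [].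
have uM1 := @unit_ata _ _ F BF hBF.
have hBG' : ctrmx BG *m ctrmx G = 1%:M by rewrite -ctrmx_mul hBG ctrmx1.
have uM2 := @unit_ata _ _ (ctrmx G) (ctrmx BG) hBG'; rewrite ctrmxK in uM2.
set N1 := invmx (ctrmx F *m F); set N2 := invmx (G *m ctrmx G).
have e1 : N1 *m (ctrmx F *m F) = 1%:M := mulVmx uM1.
have e2 : G *m ctrmx G *m N2 = 1%:M := mulmxV uM2.
have hN1 : ctrmx N1 = N1 by rewrite /N1 ctrmx_inv ctrmx_mul ctrmxK.
have hN2 : ctrmx N2 = N2 by rewrite /N2 ctrmx_inv ctrmx_mul ctrmxK.
exists (ctrmx G *m N2 *m N1 *m ctrmx F).
have hAX : A *m (ctrmx G *m N2 *m N1 *m ctrmx F) = F *m N1 *m ctrmx F.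
  rewrite -hA !mulmxA -(mulmxA F G) -(mulmxA F (G *m ctrmx G)) e2 mulmx1.
  by [].
have hXA : ctrmx G *m N2 *m N1 *m ctrmx F *m A = ctrmx G *m N2 *m G.
  rewrite -hA !mulmxA -(mulmxA (ctrmx G *m N2 *m N1)) .
  by rewrite -(mulmxA (ctrmx G *m N2)) e1 mulmx1.
split.
- rewrite hAX -hA !mulmxA -(mulmxA (F *m N1)) -(mulmxA F) e1 mulmx1 //.
- rewrite hXA !mulmxA -(mulmxA (ctrmx G *m N2) G) -(mulmxA (ctrmx G *m N2) (G *m ctrmx G)) e2 mulmx1 //.
- by rewrite hAX !ctrmx_mul ctrmxK hN1 mulmxA.
- by rewrite hXA !ctrmx_mul ctrmxK hN2 mulmxA.
Qed.

Lemma MP_exists m n (A : 'M[C]_(m, n)) : exists X, is_MP A X.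
Proof.
have [BF hBF] : exists B, B *m col_base A = 1%:M.
  by apply/row_fullP; exact: col_base_full.
have [BG hBG] : exists B, row_base A *m B = 1%:M.
  by apply/row_freeP; exact: row_base_free.
by have := @MP_fact _ _ _ _ _ _ _ hBF hBG; rewrite mulmx_base.
Qed.

Lemma mpinvP m n (A : 'M[C]_(m, n)) : is_MP A (mpinv A).
Proof.
rewrite /mpinv; apply: (epsilon_spec (inhabits 0) (is_MP A)).
exact: MP_exists.
Qed.


Lemma ctrmx_inj m n (M N : 'M[C]_(m, n)) : ctrmx M = ctrmx N -> M = N.
Proof. by move=> h; rewrite -[M]ctrmxK h ctrmxK. Qed.

Section MPfacts.
Variables (m n : nat) (A : 'M[C]_(m, n)) (X : 'M[C]_(n, m)).
Hypothesis hX : is_MP A X.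

Lemma mp1 : A *m X *m A = A. Proof. by case: hX. Qed.
Lemma mp2 : X *m A *m X = X. Proof. by case: hX. Qed.
Lemma mp3 : ctrmx (A *m X) = A *m X. Proof. by case: hX. Qed.
Lemma mp4 : ctrmx (X *m A) = X *m A. Proof. by case: hX. Qed.

Lemma mpa : X = X *m ctrmx X *m ctrmx A.
Proof. by rewrite -mulmxA -ctrmx_mul mp3 mulmxA mp2. Qed.
Lemma mpc : X = ctrmx A *m ctrmx X *m X.
Proof. by rewrite -ctrmx_mul mp4 mp2. Qed.
Lemma mpb : ctrmx A = ctrmx A *m A *m X.
Proof.
by rewrite -{1}mp1 ctrmx_mul mp3 mulmxA.
Qed.
Lemma mpb' : ctrmx A = X *m A *m ctrmx A.
Proof.
by rewrite -{1}mp1 -mulmxA ctrmx_mul mp4.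
Qed.
End MPfacts.
Arguments mp1 {m n A X}. Arguments mp2 {m n A X}. Arguments mp3 {m n A X}.
Arguments mp4 {m n A X}. Arguments mpa {m n A X}. Arguments mpb {m n A X}.
Arguments mpb' {m n A X}. Arguments mpc {m n A X}.

Lemma mp_unique m n (A : 'M[C]_(m, n)) X Y : is_MP A X -> is_MP A Y -> X = Y.
Proof.
move=> hX hY.
have e1 : X = X *m A *m Y.
  by rewrite {1}(mpa hX) {1}(mpb hY) !mulmxA -(mpa hX).
have e2 : Y = X *m A *m Y.
  rewrite {1}(mpc hY) {1}(mpb' hX) -!mulmxA (mulmxA (ctrmx A)) -(mpc hY).
  by rewrite mulmxA.
by rewrite e1 -e2.
Qed.

Lemma mp_ctr n (A X : 'M[C]_n) : is_MP A X -> ctrmx A = A -> is_MP A (ctrmx X).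
Proof.
move=> hX hA; split.
- apply: ctrmx_inj; by rewrite !ctrmx_mul ctrmxK hA mulmxA (mp1 hX).
- apply: ctrmx_inj; by rewrite !ctrmx_mul !ctrmxK hA mulmxA (mp2 hX).
- by rewrite ctrmx_mul ctrmxK hA -{2}hA -ctrmx_mul (mp4 hX).
- by rewrite ctrmx_mul ctrmxK hA -{2}hA -ctrmx_mul (mp3 hX).
Qed.

Lemma mp_herm n (A : 'M[C]_n) : ctrmx A = A -> ctrmx (mpinv A) = mpinv A.
Proof.
move=> hA; have hX := @mpinvP _ _ A.
symmetry; apply: (@mp_unique _ _ A _ _ hX); exact: mp_ctr.
Qed.

End Aux.
Arguments mpinvP {C m n} A.
Arguments MP_exists {C m n} A.
Arguments mp_herm {C n A}.
Arguments mp1 {C m n A X}.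
Arguments mp2 {C m n A X}.
Arguments mp3 {C m n A X}.
Arguments mp4 {C m n A X}.
Arguments mpa {C m n A X}.
Arguments mpb {C m n A X}.
Arguments mpb' {C m n A X}.
Arguments mpc {C m n A X}.
Arguments mp_unique {C m n A X Y}.
Arguments ker_aat {C m n k U y}.
Arguments ker_aat_l {C m n k U B}.
Arguments ker_ata {C m n k U y}.
Arguments cfree {C m n A}.
Arguments cfree' {C m n A}.
Lemma range_incl (C : numClosedFieldType) m n k (A : 'M[C]_(m, n)) (B : 'M[C]_(m, k)) T :
  A = B *m T -> forall x, range A x -> range B x.
Proof. by move=> -> x [y ->]; exists (T *m y); rewrite mulmxA. Qed.
Arguments range_incl {C m n k A B T}.

Theorem theorem2 (C : numClosedFieldType) (m p q : nat)
    (U : 'M[C]_(m, p)) (V : 'M[C]_(q, m)) :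
  let E := U *m mpinv (V *m U) *m V in
  E *m E = E /\
      eqsp (range E) (range (U *m ctrmx U *m ctrmx V)) /\
      eqsp (range E) (range (U *m ctrmx U *m ctrmx V *m V)) /\
      eqsp (range E)
        (capsp (range U)
           (orthc (imsp (mpinv (U *m ctrmx U)) (capsp (range U) (nullsp V))))) /\
      eqsp (nullsp E) (nullsp (ctrmx U *m ctrmx V *m V)) /\
      eqsp (nullsp E) (nullsp (U *m ctrmx U *m ctrmx V *m V)) /\
    is_dsum (nullsp E) (nullsp V)
        (imsp (mpinv (ctrmx V *m V)) (orthc (addsp (range U) (nullsp V)))).
Proof.
move=> E.
pose W := V *m U; pose X := mpinv W.
have hX : is_MP W X := mpinvP W.
have eE : E = U *m X *m V by [].
clearbody E.
have hWc : ctrmx W = ctrmx U *m ctrmx V by rewrite ctrmx_mul.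
have p1 : E *m E = E.
  rewrite eE !mulmxA -(mulmxA (U *m X) V U) -/W -(mulmxA U X W).
  by rewrite -(mulmxA U (X *m W) X) (mp2 hX).
have e1 : E = U *m ctrmx U *m ctrmx V *m (ctrmx X *m X *m V).
  by rewrite eE {1}(mpc hX) hWc !mulmxA.
have e2 : U *m ctrmx U *m ctrmx V = E *m (U *m ctrmx W).
  rewrite -mulmxA -hWc {1}(mpb' hX) eE !mulmxA.
  by rewrite -(mulmxA (U *m X) V U).
have p2 : eqsp (range E) (range (U *m ctrmx U *m ctrmx V)).
  move=> x; split; [exact: (range_incl e1 x) | exact: (range_incl e2 x)].
have [Yv hYv] := MP_exists V.
have e3 : U *m ctrmx U *m ctrmx V = U *m ctrmx U *m ctrmx V *m V *m Yv.
  by rewrite {1}(mpb hYv) !mulmxA.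
have p3 : eqsp (range E) (range (U *m ctrmx U *m ctrmx V *m V)).
  move=> x; rewrite p2; split; first exact: (range_incl e3 x).
  by apply: (range_incl (T := V) _ x).
have p5 : eqsp (nullsp E) (nullsp (ctrmx U *m ctrmx V *m V)).
  move=> x; rewrite /nullsp; split => h.
  - have h1 : X *m V *m x = 0.
      have h2 : X *m V *m x = ctrmx U *m (ctrmx V *m ctrmx X *m X *m V *m x).
        by rewrite {1}(mpc hX) hWc !mulmxA.
      rewrite h2; apply: ker_aat.
      by rewrite -mulmxA -h2 !mulmxA -eE h.
    by rewrite -hWc (mpb hX) -!mulmxA (mulmxA X) h1 !mulmx0.
  - have h' : ctrmx U *m (ctrmx V *m (V *m x)) = 0 by rewrite !mulmxA.
    by rewrite eE (mpa hX) hWc -!mulmxA h' !mulmx0.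
have p6 : eqsp (nullsp E) (nullsp (U *m ctrmx U *m ctrmx V *m V)).
  move=> x; rewrite p5 /nullsp; split => h.
  - by rewrite -!mulmxA (mulmxA (ctrmx U)) (mulmxA _ V) h mulmx0.
  - have h' : U *m ctrmx U *m (ctrmx V *m V *m x) = 0 by rewrite !mulmxA.
    by have := ker_aat h'; rewrite !mulmxA.
pose Z := mpinv (U *m ctrmx U).
have hZ : is_MP (U *m ctrmx U) Z := mpinvP _.
have hPc : ctrmx (U *m ctrmx U) = U *m ctrmx U by rewrite ctrmx_mul ctrmxK.
have hZc : ctrmx Z = Z := mp_herm hPc.
have hPZU : U *m ctrmx U *m Z *m U = U.
  apply/eqP; rewrite -subr_eq0; apply/eqP.
  rewrite -[X in _ - X]mul1mx -mulmxBl; apply: ker_aat_l.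
  by rewrite -mulmxA mulmxBl mul1mx (mp1 hZ) subrr.
have p4 : eqsp (range E)
        (capsp (range U)
           (orthc (imsp Z (capsp (range U) (nullsp V))))).
  move=> x; split.
  - move=> /(p2 x) [y ->]; split.
      by exists (ctrmx U *m ctrmx V *m y); rewrite !mulmxA.
    move=> y0 [s [[w ->] hs] ->].
    have k : ctrmx (U *m w) *m Z *m U *m ctrmx U = ctrmx (U *m w).
      rewrite -{1}hZc -mulmxA -hPc -!ctrmx_mul.
      by rewrite !mulmxA hPZU.
    rewrite ctrmx_mul hZc !mulmxA k -ctrmx_mul.
    by rewrite /nullsp in hs; rewrite hs ctrmx0 mul0mx.
  - move=> [[a ->] horth].
    set c := ctrmx U *m Z *m (U *m a).
    set M := c - X *m W *m c.
    have hM : M = 0.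
      apply: cfree.
      have hin : imsp Z (capsp (range U) (nullsp V))
                   (Z *m (U *m (M - X *m W *m M))).
        exists (U *m (M - X *m W *m M)) => //; split; first by exists (M - X *m W *m M).
        by rewrite /nullsp mulmxA -/W mulmxBr !mulmxA -(mulmxA (W *m X) V U) -/W (mp1 hX) subrr.
      have := horth _ hin.
      rewrite ctrmx_mul hZc ctrmx_mul ctrmxB ctrmx_mul (mp4 hX) => <-.
      rewrite {2}/M mulmxBr /c mulmxBl !mulmxA.
      by rewrite !mulmxBl ?mulmxA.
    have hc : c = X *m W *m c by apply/eqP; rewrite -subr_eq0 -/M hM.
    have hUc : U *m c = U *m a by rewrite /c !mulmxA hPZU.
    exists (U *m a); rewrite -hUc {1}hc eE /W !mulmxA //.
pose Q := ctrmx V *m V.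
pose Y := mpinv Q.
have hY : is_MP Q Y := mpinvP _.
have hQc : ctrmx Q = Q by rewrite /Q ctrmx_mul ctrmxK.
have hYc : ctrmx Y = Y := mp_herm hQc.
have hYQ : Y *m Q = Q *m Y by rewrite -[RHS](mp3 hY) ctrmx_mul hYc hQc.
have hN : forall x : 'cV[C]_m, E *m x = 0 <-> ctrmx U *m (Q *m x) = 0.
  move=> x; have := p5 x; rewrite /nullsp /Q !mulmxA //.
have p7 : is_dsum (nullsp E) (nullsp V)
        (imsp Y (orthc (addsp (range U) (nullsp V)))).
  split.
  - move=> x; split.
    + move/hN => h; exists (x - Y *m (Q *m x)), (Y *m (Q *m x)); split.
      * apply: ker_ata; rewrite -/Q mulmxBr !mulmxA -(mulmxA (Q *m Y)) -/Q (mp1 hY) subrr //.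
      * exists (Q *m x) => //.
        move=> y [s [t [[w ->] ht ->]]].
        rewrite ctrmxD mulmxDl ctrmx_mul -mulmxA h mulmx0 add0r.
        rewrite /Q -mulmxA mulmxA -ctrmx_mul.
        by rewrite /nullsp in ht; rewrite ht ctrmx0 mul0mx.
      * by rewrite subrK.
    + move=> [s [t [hs [z hz ->] ->]]]; apply/hN.
      have hUz : ctrmx U *m z = 0.
        apply: cfree.
        have hin : addsp (range U) (nullsp V) (U *m (ctrmx U *m z)).
          exists (U *m (ctrmx U *m z)), 0; split => //; first by exists (ctrmx U *m z).
            by rewrite /nullsp mulmx0.
          by rewrite addr0.
        by move: (hz _ hin); rewrite ctrmx_mul -mulmxA.
      have hQYz : Q *m (Y *m z) = z.
        set w := z - Q *m (Y *m z).
        have hQQY : Q *m Q *m Y = Q by rewrite -mulmxA -hYQ mulmxA (mp1 hY).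
        have hQw : Q *m w = 0 by rewrite /w mulmxBr (mulmxA Q Q) (mulmxA (Q *m Q)) hQQY subrr.
        have hVw : V *m w = 0 by apply: ker_ata; exact: hQw.
        have hwz : ctrmx w *m z = 0.
          apply: hz; exists 0, w; split => //; last by rewrite add0r.
          by exists 0; rewrite mulmx0.
        have hwQ : ctrmx w *m (Q *m (Y *m z)) = 0.
          by rewrite mulmxA -hQc -ctrmx_mul hQw ctrmx0 !mul0mx.
        have hww : ctrmx w *m w = 0.
          have -> : ctrmx w *m w = ctrmx w *m z - ctrmx w *m (Q *m (Y *m z)).
            by rewrite -mulmxBr.
          by rewrite hwz hwQ subr0.
        have := cfree hww; rewrite /w => /eqP; rewrite subr_eq0 => /eqP.
        by move=> <-.
      rewrite mulmxDr hQYz mulmxDr hUz addr0 /Q -mulmxA.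
      by rewrite /nullsp in hs; rewrite hs !mulmx0.
  - move=> x hx [z _ hxz].
    have ex : x = Q *m (Y *m (Y *m z)).
      by rewrite hxz -{1}(mp2 hY) hYQ !mulmxA.
    apply: cfree; rewrite {2}ex mulmxA -hQc -ctrmx_mul /Q -mulmxA.
    by rewrite /nullsp in hx; rewrite hx mulmx0 ctrmx0 mul0mx.
by do ![split=> //].
Qed.
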